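(* Let $q=2^m$ with $m\ge2$, $c\in\mathrm{GF}(q^2)^*\setminus U_{q+1}$, and $e$ an integer with $1\le e\le q$. Let $a_0+a_1u+\cdots+a_qu^q$ ($a_i\in\mathrm{GF}(q^2)$) be the polynomial expansion of the function $U_{q+1}\to\mathrm{GF}(q^2)$, $u\mapsto\left(\frac{u+c^q}{cu+1}\right)^e$. Then $a_0=0$ and $a_1=c^{q(e-1)}$.
   Context: $U_{q+1}$ denotes the set of $(q+1)$-th roots of unity in $\mathrm{GF}(q^2)$. The polynomial expansion of a function $f:U_{q+1}\to\mathrm{GF}(q^2)$ is the unique polynomial $\sum_{i=0}^{q}a_iu^i$ of degree at most $q$ with $f(u)=\sum_{i=0}^q a_iu^i$ for all $u\in U_{q+1}$. *)

(* Defs.v *)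
From HB Require Import structures.
From mathcomp Require Import all_boot all_order all_algebra all_field.
Set Implicit Arguments. Unset Strict Implicit. Unset Printing Implicit Defensive.
Import GRing.Theory.
Local Open Scope ring_scope.

Definition unit_roots (F : fieldType) (q : nat) : pred F :=
  fun u => u ^+ q.+1 == 1.

(* p : {poly F} is the polynomial expansion of f : U_{q+1} -> F:
   degree at most q (size <= q+1) and agreeing with f on U_{q+1}.
   (Such a polynomial is unique by interpolation, since |U_{q+1}| = q+1.) *)
Definition poly_expansion (F : fieldType) (q : nat) (f : F -> F) (p : {poly F}) :=
  (size p <= q.+1)%N /\ forall u, unit_roots q u -> p.[u] = f u.

(* Main.v *)
Require Import Defs.
From HB Require Import structures.
From mathcomp Require Import all_boot all_order all_algebra all_field all_solvable.
From mathcomp Require Import ring zify.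
Import GRing.Theory.
Local Open Scope ring_scope.

Lemma dvd_mid (n t : nat) : (0 < t < n * 2)%N -> (n %| t)%N = (t == n).
Proof.
move=> /andP [h1 h2]; apply/idP/eqP => [/dvdnP [k Hk]|->]; last exact: dvdnn.
subst t; case: k h1 h2 => [|[|k]] h1 h2; first by rewrite mul0n in h1.
  by rewrite mul1n.
rewrite !mulSn in h2; lia.
Qed.

Lemma dvd_a (q e j : nat) : (1 <= e <= q)%N -> (j < q.+1)%N ->
  (q.+1 %| e + (q - j) + 1)%N = (j == e).
Proof.
move=> he hj; rewrite dvd_mid; last by lia.
by apply/eqP/eqP; lia.
Qed.

Lemma dvd_b (q e j : nat) : (1 <= e <= q)%N -> (j < q.+1)%N ->
  (q.+1 %| e + (q - j))%N = (j == e - 1)%N.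
Proof.
move=> he hj; rewrite dvd_mid; last by lia.
by apply/eqP/eqP; lia.
Qed.

Lemma dvd_c (n j k : nat) : (j < n)%N -> (k < n)%N ->
  (n %| j + (n - k))%N = (j == k).
Proof.
move=> hj hk; rewrite dvd_mid; last by lia.
by apply/eqP/eqP; lia.
Qed.

Section Aux.
Variable F : fieldType.

Lemma sumpow (n : nat) (w : F) (t : nat) : n.-primitive_root w ->
  \sum_(i < n) (w ^+ i) ^+ t = if (n %| t)%N then n%:R else 0.
Proof.
move=> pw.
have n0 : (0 < n)%N := prim_order_gt0 pw.
under eq_bigr => i _ do rewrite exprAC.
set x := w ^+ t.
have xn : x ^+ n = 1 by rewrite /x exprAC (prim_expr_order pw) expr1n.
case: ifP => ht.
- have x1 : x = 1.
    by rewrite /x; case/dvdnP: ht => k ->; rewrite mulnC exprM (prim_expr_order pw) expr1n.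
  rewrite x1; under eq_bigr => i _ do rewrite expr1n.
  by rewrite sumr_const card_ord.
- have x1 : x != 1.
    rewrite /x -(prim_expr_order pw) (eq_prim_root_expr pw) modnn.
    by move: ht; rewrite /dvdn => ->.
  set S := \sum_(i < n) x ^+ i.
  have h1 : \sum_(i < n.+1) x ^+ i = 1 + x * S.
    by rewrite big_ord_recl expr0 mulr_sumr; congr (_ + _); apply: eq_bigr => i _; rewrite exprS.
  have h2 : \sum_(i < n.+1) x ^+ i = S + 1 by rewrite big_ord_recr /= xn.
  have : (x - 1) * S = 0.
    by rewrite mulrBl mul1r; apply/eqP; rewrite subr_eq0; apply/eqP;
       apply: (addrI 1); rewrite -h1 h2 addrC.
  by move/eqP; rewrite mulf_eq0 subr_eq0 (negbTE x1) /= => /eqP.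
Qed.

Lemma coef_from_vals (n : nat) (w : F) (p : {poly F}) (k : nat) :
  n.-primitive_root w -> n%:R = 1 :> F -> (size p <= n)%N -> (k < n)%N ->
  p`_k = \sum_(i < n) p.[w ^+ i] * (w ^+ i) ^+ (n - k).
Proof.
move=> pw n1 sp kn.
under eq_bigr => i _ do rewrite (horner_coef_wide _ sp) mulr_suml.
rewrite exchange_big /=.
under eq_bigr => j _.
  under eq_bigr => i _ do rewrite -mulrA -exprD.
  rewrite -mulr_sumr sumpow // dvd_c //.
  over.
rewrite (bigD1 (Ordinal kn)) //= eqxx n1 mulr1 big1 ?addr0 // => j hj.
by rewrite ifN ?mulr0 //; apply: contra hj => /eqP h; apply/eqP/val_inj.
Qed.

Lemma sum_dirac (n a : nat) (G : nat -> F) : (a < n)%N ->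
  \sum_(j < n) G j * (if j == a :> nat then 1 else 0) = G a.
Proof.
move=> ha.
have E : forall j : 'I_n, G j * (if j == a :> nat then 1 else 0) = if j == a :> nat then G j else 0.
  by move=> j; case: ifP; rewrite ?mulr1 ?mulr0.
rewrite (eq_bigr _ (fun j _ => E j)).
by rewrite -big_mkcond big_ord1_eq ha.
Qed.

Lemma frob2 (two : 2%:R = 0 :> F) (x y : F) k :
  (x + y) ^+ (2 ^ k) = x ^+ (2 ^ k) + y ^+ (2 ^ k).
Proof.
elim: k => [|k IH]; first by rewrite !expn0 !expr1.
rewrite expnSr !exprM IH sqrrD -mulr_natr two mulr0 addr0.
done.
Qed.

End Aux.

Theorem lemma10 (F : finFieldType) (m q : nat) (hm : (2 <= m)%N) (hq : q = (2 ^ m)%N)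
  (hF : #|F| = (q ^ 2)%N) (c : F) (hc0 : c != 0) (hcU : ~~ unit_roots q c)
  (e : nat) (he : (1 <= e <= q)%N) (p : {poly F})
  (hp : poly_expansion q (fun u => ((u + c ^+ q) / (c * u + 1)) ^+ e) p) :
  p`_0 = 0 /\ p`_1 = c ^+ (q * (e - 1)).
Proof.
have q2 : (2 %| q)%N by rewrite hq; case: m {hq hF hp} hm => // m' _; rewrite expnS dvdn_mulr.
have pch : (2 \in [pchar F])%N.
  by apply: (@card_finPcharP _ _ (m * 2)%N) => //; rewrite hF hq -expnM.
have two : 2%:R = 0 :> F := pcharf0 pch.
have qR : q%:R = 0 :> F by case/dvdnP: q2 => k ->; rewrite natrM two mulr0.
have xx : forall x : F, x + x = 0 by move=> x; rewrite -mulr2n -mulr_natr two mulr0.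
have opp : forall x : F, - x = x.
  by move=> x; apply/eqP; rewrite eq_sym -subr_eq0 opprK xx.
have frob : forall x y : F, (x + y) ^+ q = x ^+ q + y ^+ q.
  by move=> x y; rewrite hq frob2.
have q1 : (1 < q)%N by rewrite hq; have := ltn_exp2l 0 m (isT : (1 < 2)%N); rewrite expn0 => ->; lia.
set n := q.+1.
have nR : n%:R = 1 :> F by rewrite /n -addn1 natrD qR add0r.
have [w wprim] : exists w : F, n.-primitive_root w.
  pose rs := enum (predC1 (0:F)).
  have cF : (0 < #|F|.-1)%N by rewrite hF expnS expn1; nia.
  have /hasP[z _ zp] : has (#|F|.-1).-primitive_root rs.
  apply: has_prim_root => //.
  - apply/allP => x; rewrite mem_enum /= => x0.
    rewrite unity_rootE; apply/eqP; apply: (mulIf x0).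
    have F0 : (0 < #|F|)%N by rewrite hF expnS expn1; nia.
    by rewrite -exprSr prednK ?expf_card ?mul1r.
  - exact: enum_uniq.
  - by rewrite -cardE cardC1.
  exists (z ^+ (#|F|.-1 %/ n)); apply: dvdn_prim_root => //.
  apply/dvdnP; exists q.-1; rewrite hF /n expnS expn1; nia.
have uU : forall i : nat, (w ^+ i) ^+ n = 1.
  by move=> i; rewrite exprAC (prim_expr_order wprim) expr1n.
have hcn : c ^+ n != 1 by exact: hcU.
set d := c ^+ q.
have dq : d ^+ q = c by rewrite /d -exprM mulnn -hF expf_card.
have cdn : c * d = c ^+ n by rewrite /n exprS.
have cd1 : 1 + c * d != 0.
  by apply: contra hcn; rewrite addr_eq0 opp eq_sym cdn.
have den : forall u, u ^+ n = 1 -> c * u + 1 != 0.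
  move=> u hu; apply/negP; rewrite addr_eq0 opp => /eqP h.
  move/negP: hcn; apply; apply/eqP.
  have : (c * u) ^+ n = 1 by rewrite h expr1n.
  by rewrite exprMn hu mulr1.
pose g u := (u + d) / (c * u + 1).
have gq : forall u, u ^+ n = 1 -> (g u) ^+ q = (c * u + 1) / (u + d) /\ u + d != 0.
  move=> u hu.
  have B0 := den u hu.
  set v := u ^+ q.
  have vu : v * u = 1 by rewrite /v -exprSr.
  have v0 : v != 0 by apply/eqP => v0; move: vu; rewrite v0 mul0r => /eqP; rewrite eq_sym oner_eq0.
  have e1 : v + c = v * (c * u + 1) by rewrite mulrDr mulr1 mulrCA vu mulr1 addrC.
  have e2 : d * v + 1 = v * (u + d) by rewrite mulrDr vu mulrC addrC.
  have gq' : (g u) ^+ q = (v + c) / (d * v + 1).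
    by rewrite /g expr_div_n !frob exprMn dq expr1n.
  have ud : u + d != 0.
    have : (c * u + 1) ^+ q != 0 by rewrite expf_neq0.
    by rewrite frob exprMn expr1n -/v e2 mulf_eq0 negb_or => /andP[].
  split => //.
  rewrite gq' e1 e2; field.
  by rewrite v0 ud.
have ginv : forall u, u ^+ n = 1 -> g (g u) = u.
  move=> u hu; have B0 := den u hu.
  have h1 : (u + d) + d * (c * u + 1) = u * (1 + c * d).
    transitivity (u * (1 + c * d) + (d + d)); first ring.
    by rewrite xx addr0.
  have h2 : c * (u + d) + (c * u + 1) = 1 + c * d.
    transitivity (1 + c * d + (c * u + c * u)); first ring.
    by rewrite xx addr0.
  have E1 : g u + d = u * (1 + c * d) / (c * u + 1) by rewrite -h1 /g; field.
  have E2 : c * g u + 1 = (1 + c * d) / (c * u + 1) by rewrite -h2 /g; field.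
  by rewrite {1}/g E1 E2; field; rewrite cd1 B0.
have gU : forall u, u ^+ n = 1 -> (g u) ^+ n = 1.
  move=> u hu; have [gq1 ud] := gq u hu; have B0 := den u hu.
  by rewrite /n exprS gq1 /g; field; rewrite ud B0.
have wU : forall i : 'I_n, unit_roots q (w ^+ i) by move=> i; rewrite /unit_roots uU.
pose h (i : 'I_n) : 'I_n := sval (prim_rootP wprim (gU _ (uU i))).
have hspec : forall i : 'I_n, g (w ^+ i) = w ^+ (h i) := fun i => svalP (prim_rootP wprim (gU _ (uU i))).
have hinj : injective h.
  move=> i j hij; have : g (g (w ^+ i)) = g (g (w ^+ j)) by rewrite !hspec hij.
  rewrite !ginv ?uU // => /eqP; rewrite (eq_prim_root_expr wprim) !modn_small //.
  by move/eqP; apply: val_inj.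
have [sp pv] := hp.
have pw : forall i : 'I_n, p.[w ^+ i] = g (w ^+ i) ^+ e := fun i => pv _ (wU i).
split.
- rewrite (@coef_from_vals F n w p _ wprim nR sp) //.
  under eq_bigr => i _ do rewrite pw subn0 uU mulr1.
  rewrite (reindex_inj hinj) /=.
  under eq_bigr => i _ do rewrite -hspec ginv ?uU //.
  by rewrite (@sumpow F n w _ wprim) gtnNdvd //; lia.
set K := (1 + c * d)^-1.
have expand : forall u, u ^+ n = 1 -> u ^+ e * ((c * u + 1) / (u + d)) =
    \sum_(j < n) K * (d ^+ j * (c * u ^+ (e + (q - j) + 1) + u ^+ (e + (q - j)))).
  move=> u hu; have [_ ud] := gq u hu.
  set S := \sum_(j < n) u ^+ (q - j) * d ^+ j.
  have geo : (u + d) * S = 1 + c * d.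
    have := subrXX u d n; rewrite hu /n exprS dq !opp /= => <-.
    by rewrite mulrC.
  have SE : S = (1 + c * d) / (u + d) by rewrite -geo; field.
  rewrite -mulr_sumr.
  have -> : \sum_(j < n) d ^+ j * (c * u ^+ (e + (q - j) + 1) + u ^+ (e + (q - j)))
      = u ^+ e * (c * u + 1) * S.
    rewrite /S mulr_sumr; apply: eq_bigr => j _.
    rewrite !exprD expr1; ring.
  rewrite SE /K; field.
  by rewrite cd1 ud.
- rewrite (@coef_from_vals F n w p 1 wprim nR sp); last by rewrite /n; lia.
  have n1 : (n - 1 = q)%N by rewrite /n subn1.
  under eq_bigr => i _ do rewrite pw n1.
  rewrite (reindex_inj hinj) /=.
  under eq_bigr => i _ do rewrite -hspec ginv ?uU // (gq _ (uU i)).1 expand ?uU //.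
  rewrite exchange_big /=.
  under eq_bigr => j _.
    rewrite -mulr_sumr; under eq_bigr => i _ do rewrite mulrDr mulrA.
    rewrite big_split /= -!mulr_sumr (@sumpow F n w _ wprim) (@sumpow F n w _ wprim).
    rewrite dvd_a // dvd_b // nR.
    over.
  rewrite /= -mulr_sumr big_split /=.
  rewrite (@sum_dirac F n e (fun j => d ^+ j * c)) ?(@sum_dirac F n (e - 1) (fun j => d ^+ j)) /n; try lia.
  rewrite exprM -/d /K.
  have [e' ->] : exists e', e = e'.+1 by case: (e) he => // e' _; exists e'.
  rewrite subn1 /=.
  rewrite exprS; field.
  by rewrite cd1.
Qed.
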